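(* Let $M=\begin{pmatrix}A&B\\ C&D\end{pmatrix}$ be an operator matrix on $X\oplus Y$, where $A\in\mathcal{L}(X)$ and $D\in\mathcal{L}(Y)$ have g-Drazin inverses, $B\in\mathcal{L}(Y,X)$, $C\in\mathcal{L}(X,Y)$. If $ABC=0$, $CBC=0$, $DCA=0$ and $DCB=0$, then $M$ has a g-Drazin inverse in $\mathcal{L}(X\oplus Y)$.
   Context: $X,Y$ are complex Banach spaces; $\mathcal{L}(X)$ denotes the Banach algebra of bounded linear operators on $X$, and $\mathcal{L}(Y,X)$ the bounded operators from $Y$ to $X$. An element $a$ of a unital Banach algebra $\mathcal{A}$ is quasinilpotent if $\lim_{n\to\infty}\|a^n\|^{1/n}=0$. An element $a\in\mathcal{A}$ has a g-Drazin (generalized Drazin) inverse if there exists $x\in\mathcal{A}$ with $x=xax$, $ax=xa$, and $a-a^2x$ quasinilpotent; such $x$ is unique and is denoted $a^d$. *)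

(* Defs.v *)
From Stdlib Require Import Reals.
Open Scope R_scope.

Definition Cx : Type := (R * R)%type.
Definition Cx0 : Cx := (0, 0).
Definition Cx1 : Cx := (1, 0).
Definition Cxplus (a b : Cx) : Cx := (fst a + fst b, snd a + snd b).
Definition Cxmult (a b : Cx) : Cx :=
  (fst a * fst b - snd a * snd b, fst a * snd b + snd a * fst b).
Definition Cxmod (a : Cx) : R := sqrt (fst a ^ 2 + snd a ^ 2).

Record NS := {
  car :> Type;
  nzero : car;
  nadd : car -> car -> car;
  nopp : car -> car;
  nscal : Cx -> car -> car;
  nnorm : car -> R }.

Arguments nzero {_}.
Arguments nadd {_} _ _.
Arguments nopp {_} _.
Arguments nscal {_} _ _.
Arguments nnorm {_} _.

Definition nsub {V : NS} (x y : V) : V := nadd x (nopp y).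

Definition is_cbanach (V : NS) : Prop :=
  (forall x y z : V, nadd x (nadd y z) = nadd (nadd x y) z) /\
  (forall x y : V, nadd x y = nadd y x) /\
  (forall x : V, nadd x nzero = x) /\
  (forall x : V, nadd x (nopp x) = nzero) /\
  (forall (a b : Cx) (x : V), nscal a (nscal b x) = nscal (Cxmult a b) x) /\
  (forall x : V, nscal Cx1 x = x) /\
  (forall (a : Cx) (x y : V), nscal a (nadd x y) = nadd (nscal a x) (nscal a y)) /\
  (forall (a b : Cx) (x : V), nscal (Cxplus a b) x = nadd (nscal a x) (nscal b x)) /\
  (forall x : V, 0 <= nnorm x) /\
  (forall x : V, nnorm x = 0 -> x = nzero) /\
  (forall (a : Cx) (x : V), nnorm (nscal a x) = Cxmod a * nnorm x) /\
  (forall x y : V, nnorm (nadd x y) <= nnorm x + nnorm y) /\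
  (forall u : nat -> V,
     (forall eps, 0 < eps -> exists N, forall m n, (N <= m)%nat -> (N <= n)%nat ->
        nnorm (nsub (u m) (u n)) < eps) ->
     exists l : V, forall eps, 0 < eps -> exists N, forall n, (N <= n)%nat ->
        nnorm (nsub (u n) l) < eps).

Definition is_blin (V W : NS) (f : V -> W) : Prop :=
  (forall x y : V, f (nadd x y) = nadd (f x) (f y)) /\
  (forall (a : Cx) (x : V), f (nscal a x) = nscal a (f x)) /\
  (exists c, forall x : V, nnorm (f x) <= c * nnorm x).

(* lim ||T^n||^(1/n) = 0, written out: for every eps > 0, eventually
   ||T^n|| < eps^n, i.e. T^n admits an operator bound c < eps^n. *)
Definition quasinilpotent (V : NS) (T : V -> V) : Prop :=
  forall eps, 0 < eps -> exists N : nat, forall n : nat, (N <= n)%nat ->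
    exists c, c < eps ^ n /\ forall x : V, nnorm (Nat.iter n T x) <= c * nnorm x.

Definition has_gdrazin (V : NS) (a : V -> V) : Prop :=
  exists x : V -> V, is_blin V V x /\
    (forall v, x (a (x v)) = x v) /\
    (forall v, a (x v) = x (a v)) /\
    quasinilpotent V (fun v => nsub (a v) (a (a (x v)))).

Definition prodNS (X Y : NS) : NS := {|
  car := (car X * car Y)%type;
  nzero := (nzero, nzero);
  nadd := fun p q => (nadd (fst p) (fst q), nadd (snd p) (snd q));
  nopp := fun p => (nopp (fst p), nopp (snd p));
  nscal := fun a p => (nscal a (fst p), nscal a (snd p));
  nnorm := fun p => nnorm (fst p) + nnorm (snd p) |}.

Definition opmat {X Y : NS} (A : X -> X) (B : Y -> X) (C : X -> Y) (D : Y -> Y)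
  : prodNS X Y -> prodNS X Y :=
  fun p => (nadd (A (fst p)) (B (snd p)), nadd (C (fst p)) (D (snd p))).

(* Main.v *)
Require Import Defs.
From Stdlib Require Import Reals Lra Lia Psatz Arith.
From Stdlib Require Import FunctionalExtensionality ClassicalEpsilon Classical.
Open Scope R_scope.

Class Ban (V : NS) : Prop := ban : is_cbanach V.

Section Vec.
Context {V : NS} {HV : Ban V}.
Implicit Types x y z : V.

Lemma addA x y z : nadd x (nadd y z) = nadd (nadd x y) z.
Proof. destruct HV as (h&_); apply h. Qed.
Lemma addC x y : nadd x y = nadd y x.
Proof. destruct HV as (_&h&_); apply h. Qed.
Lemma add0 x : nadd x nzero = x.
Proof. destruct HV as (_&_&h&_); apply h. Qed.
Lemma addN x : nadd x (nopp x) = nzero.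
Proof. destruct HV as (_&_&_&h&_); apply h. Qed.
Lemma scalA a b x : nscal a (nscal b x) = nscal (Cxmult a b) x.
Proof. destruct HV as (_&_&_&_&h&_); apply h. Qed.
Lemma scal1 x : nscal Cx1 x = x.
Proof. destruct HV as (_&_&_&_&_&h&_); apply h. Qed.
Lemma scalDr a x y : nscal a (nadd x y) = nadd (nscal a x) (nscal a y).
Proof. destruct HV as (_&_&_&_&_&_&h&_); apply h. Qed.
Lemma scalDl a b x : nscal (Cxplus a b) x = nadd (nscal a x) (nscal b x).
Proof. destruct HV as (_&_&_&_&_&_&_&h&_); apply h. Qed.
Lemma norm_ge0 x : 0 <= nnorm x.
Proof. destruct HV as (_&_&_&_&_&_&_&_&h&_); apply h. Qed.
Lemma norm_eq0 x : nnorm x = 0 -> x = nzero.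
Proof. destruct HV as (_&_&_&_&_&_&_&_&_&h&_); apply h. Qed.
Lemma norm_scal a x : nnorm (nscal a x) = Cxmod a * nnorm x.
Proof. destruct HV as (_&_&_&_&_&_&_&_&_&_&h&_); apply h. Qed.
Lemma norm_tri x y : nnorm (nadd x y) <= nnorm x + nnorm y.
Proof. destruct HV as (_&_&_&_&_&_&_&_&_&_&_&h&_); apply h. Qed.
Lemma complete (u : nat -> V) :
  (forall eps, 0 < eps -> exists N, forall m n, (N <= m)%nat -> (N <= n)%nat ->
        nnorm (nsub (u m) (u n)) < eps) ->
     exists l : V, forall eps, 0 < eps -> exists N, forall n, (N <= n)%nat ->
        nnorm (nsub (u n) l) < eps.
Proof. destruct HV as (_&_&_&_&_&_&_&_&_&_&_&_&h); apply h. Qed.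

Lemma add0l x : nadd nzero x = x.
Proof. rewrite addC; apply add0. Qed.
Lemma addNl x : nadd (nopp x) x = nzero.
Proof. rewrite addC; apply addN. Qed.
Lemma add_cancel_l x y z : nadd x y = nadd x z -> y = z.
Proof.
  intro H. rewrite <- (add0l y), <- (add0l z), <- (addNl x), <- !addA, H. reflexivity.
Qed.
Lemma opp_unique x y : nadd x y = nzero -> y = nopp x.
Proof. intro H. apply (add_cancel_l x). rewrite H, addN. reflexivity. Qed.
Lemma oppK x : nopp (nopp x) = x.
Proof. symmetry; apply opp_unique. apply addNl. Qed.
Lemma opp0 : @nopp V nzero = nzero.
Proof. symmetry; apply opp_unique. apply add0. Qed.
Lemma oppD x y : nopp (nadd x y) = nadd (nopp x) (nopp y).
Proof.
  symmetry; apply opp_unique.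
  rewrite (addC (nopp x)), addA, <- (addA x), addN, add0, addN. reflexivity.
Qed.
Lemma addAC x y z : nadd (nadd x y) z = nadd (nadd x z) y.
Proof. rewrite <- !addA, (addC y). reflexivity. Qed.
Lemma addCA x y z : nadd x (nadd y z) = nadd y (nadd x z).
Proof. rewrite !addA, (addC x). reflexivity. Qed.
Lemma addKr x y : nadd (nadd x y) (nopp y) = x.
Proof. rewrite <- addA, addN, add0. reflexivity. Qed.
Lemma addNKr x y : nadd (nadd x (nopp y)) y = x.
Proof. rewrite <- addA, addNl, add0. reflexivity. Qed.
Lemma sub_eq x y : nsub x y = nzero -> x = y.
Proof. unfold nsub; intro H. apply opp_unique in H.
  rewrite <- (oppK x), <- H, oppK. reflexivity. Qed.
Lemma subrr x : nsub x x = nzero.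
Proof. apply addN. Qed.
Lemma sub0 x : nsub x nzero = x.
Proof. unfold nsub; rewrite opp0; apply add0. Qed.

Lemma Cxmod0 : Cxmod Cx0 = 0.
Proof. unfold Cxmod, Cx0; simpl. replace (0*(0*1)+0*(0*1)) with 0 by ring. apply sqrt_0. Qed.
Lemma Cxmod_m1 : Cxmod (-1, 0) = 1.
Proof. unfold Cxmod; simpl. replace (-1 * (-1 * 1) + 0 * (0 * 1)) with 1 by ring. apply sqrt_1. Qed.

Lemma scal0 x : nscal Cx0 x = nzero.
Proof.
  apply (add_cancel_l (nscal Cx0 x)). rewrite add0, <- scalDl.
  unfold Cxplus, Cx0; simpl. rewrite Rplus_0_r. reflexivity.
Qed.
Lemma scal_m1 x : nscal (-1, 0) x = nopp x.
Proof.
  apply opp_unique. rewrite addC. rewrite <- (scal1 x) at 2. rewrite <- scalDl.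
  unfold Cxplus, Cx1; simpl. replace (-1 + 1) with 0 by ring. rewrite Rplus_0_r.
  apply scal0.
Qed.
Lemma norm0 : @nnorm V nzero = 0.
Proof. rewrite <- (scal0 nzero), norm_scal, Cxmod0. ring. Qed.
Lemma norm_opp x : nnorm (nopp x) = nnorm x.
Proof. rewrite <- scal_m1, norm_scal, Cxmod_m1. ring. Qed.
Lemma norm_sub_sym x y : nnorm (nsub x y) = nnorm (nsub y x).
Proof.
  unfold nsub. rewrite <- norm_opp, oppD, oppK, addC. reflexivity.
Qed.
Lemma norm_sub_tri x y z : nnorm (nsub x z) <= nnorm (nsub x y) + nnorm (nsub y z).
Proof.
  replace (nsub x z) with (nadd (nsub x y) (nsub y z)). apply norm_tri.
  unfold nsub. rewrite <- addA, (addA (nopp y)), addNl, add0l. reflexivity.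
Qed.
End Vec.

Section Lin.
Context {V W : NS} {HV : Ban V} {HW : Ban W}.

Lemma lin_add (f : V -> W) : is_blin V W f -> forall x y, f (nadd x y) = nadd (f x) (f y).
Proof. intros [h _]; exact h. Qed.
Lemma lin_scal (f : V -> W) : is_blin V W f -> forall a x, f (nscal a x) = nscal a (f x).
Proof. intros [_ [h _]]; exact h. Qed.
Lemma lin0 (f : V -> W) : is_blin V W f -> f nzero = nzero.
Proof.
  intro hf. apply (add_cancel_l (f nzero)). rewrite <- lin_add by auto. rewrite !add0. reflexivity.
Qed.
Lemma linN (f : V -> W) : is_blin V W f -> forall x, f (nopp x) = nopp (f x).
Proof.
  intros hf x. apply opp_unique. rewrite <- lin_add, addN by auto. apply lin0; auto.
Qed.
Lemma linB (f : V -> W) : is_blin V W f -> forall x y, f (nsub x y) = nsub (f x) (f y).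
Proof. intros hf x y. unfold nsub. rewrite lin_add, linN by auto. reflexivity. Qed.
Lemma blin_bnd (f : V -> W) : is_blin V W f -> exists c, 0 <= c /\ forall x, nnorm (f x) <= c * nnorm x.
Proof.
  intros [_ [_ [c hc]]]. exists (Rabs c). split. apply Rabs_pos.
  intro x. eapply Rle_trans. apply hc. apply Rmult_le_compat_r. apply norm_ge0. apply RRle_abs.
Qed.
End Lin.

Ltac remove t e := lazymatch e with
 | nadd ?e1 t => e1
 | nadd t ?b => b
 | nadd ?e1 ?b => let e1' := remove t e1 in constr:(nadd e1' b)
 end.
Ltac bring t := lazymatch goal with
  | |- nadd ?e t = nadd ?e t => reflexivity
  | |- nadd ?b t = nadd t ?b => apply addC
  | |- nadd (nadd ?e1' ?b) t = nadd ?e1 ?b => rewrite (addAC e1' b t); f_equal; bring t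
  end.
Ltac perm_rec := lazymatch goal with
  | |- ?x = ?x => reflexivity
  | |- nadd ?L ?t = ?R =>
      let R' := remove t R in
      transitivity (nadd R' t); [ f_equal; perm_rec | bring t ]
  end.
Ltac grp := unfold nsub; rewrite ?oppD, ?oppK, ?addA; perm_rec.

#[global] Instance ban_prod (X Y : NS) {HX : Ban X} {HY : Ban Y} : Ban (prodNS X Y).
Proof.
  unfold Ban, is_cbanach; simpl.
  repeat split.
  - intros [x1 y1] [x2 y2] [x3 y3]; simpl; rewrite !addA; reflexivity.
  - intros [x1 y1] [x2 y2]; simpl; rewrite (addC x1), (addC y1); reflexivity.
  - intros [x1 y1]; simpl; rewrite !add0; reflexivity.
  - intros [x1 y1]; simpl; rewrite !addN; reflexivity.
  - intros a b [x1 y1]; simpl; rewrite !scalA; reflexivity.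
  - intros [x1 y1]; simpl; rewrite !scal1; reflexivity.
  - intros a [x1 y1] [x2 y2]; simpl; rewrite !scalDr; reflexivity.
  - intros a b [x1 y1]; simpl; rewrite !scalDl; reflexivity.
  - intros [x1 y1]; simpl. pose proof (norm_ge0 x1); pose proof (norm_ge0 y1); lra.
  - intros [x1 y1]; simpl; intro h. pose proof (norm_ge0 x1); pose proof (norm_ge0 y1).
    rewrite (norm_eq0 x1), (norm_eq0 y1) by lra. reflexivity.
  - intros a [x1 y1]; simpl; rewrite !norm_scal; ring.
  - intros [x1 y1] [x2 y2]; simpl. pose proof (norm_tri x1 x2); pose proof (norm_tri y1 y2); lra.
  - intros u hu.
    destruct (complete (fun n => fst (u n))) as [l1 hl1].
    { intros eps he. destruct (hu eps he) as [N hN]. exists N. intros m n hm hn.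
      specialize (hN m n hm hn). pose proof (norm_ge0 (nsub (snd (u m)) (snd (u n)))).
      unfold nsub in *; simpl in *. lra. }
    destruct (complete (fun n => snd (u n))) as [l2 hl2].
    { intros eps he. destruct (hu eps he) as [N hN]. exists N. intros m n hm hn.
      specialize (hN m n hm hn). pose proof (norm_ge0 (nsub (fst (u m)) (fst (u n)))).
      unfold nsub in *; simpl in *. lra. }
    exists (l1, l2). intros eps he.
    destruct (hl1 (eps/2)) as [N1 h1]. lra.
    destruct (hl2 (eps/2)) as [N2 h2]. lra.
    exists (max N1 N2). intros n hn.
    specialize (h1 n ltac:(lia)). specialize (h2 n ltac:(lia)).
    unfold nsub in *; simpl in *. lra.
Qed.

Section Comb.
Context {U V W : NS} {HU : Ban U} {HV : Ban V} {HW : Ban W}.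

Lemma blin_comp (f : V -> W) (g : U -> V) : is_blin V W f -> is_blin U V g ->
  is_blin U W (fun x => f (g x)).
Proof.
  intros hf hg. destruct (blin_bnd f hf) as [c1 [h1p h1]]. destruct (blin_bnd g hg) as [c2 [h2p h2]].
  split; [|split].
  - intros x y. rewrite (lin_add g), (lin_add f); auto.
  - intros a x. rewrite (lin_scal g), (lin_scal f); auto.
  - exists (c1 * c2). intro x. eapply Rle_trans. apply h1.
    rewrite Rmult_assoc. apply Rmult_le_compat_l; auto.
Qed.

Lemma blin_add (f g : V -> W) : is_blin V W f -> is_blin V W g ->
  is_blin V W (fun x => nadd (f x) (g x)).
Proof.
  intros hf hg. destruct (blin_bnd f hf) as [c1 [h1p h1]]. destruct (blin_bnd g hg) as [c2 [h2p h2]].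
  split; [|split].
  - intros x y. rewrite (lin_add g), (lin_add f); auto.
    rewrite !addA. f_equal. rewrite addAC. reflexivity.
  - intros a x. rewrite (lin_scal g), (lin_scal f), scalDr; auto.
  - exists (c1 + c2). intro x. eapply Rle_trans. apply norm_tri.
    specialize (h1 x); specialize (h2 x). lra.
Qed.

Lemma blin_opp (f : V -> W) : is_blin V W f -> is_blin V W (fun x => nopp (f x)).
Proof.
  intros hf. destruct (blin_bnd f hf) as [c1 [h1p h1]].
  split; [|split].
  - intros x y. rewrite (lin_add f), oppD; auto.
  - intros a x. rewrite (lin_scal f); auto. rewrite <- !scal_m1, !scalA.
    unfold Cxmult; simpl. f_equal. f_equal; ring.
  - exists c1. intro x. rewrite norm_opp. apply h1.
Qed.

Lemma blin_sub (f g : V -> W) : is_blin V W f -> is_blin V W g ->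
  is_blin V W (fun x => nsub (f x) (g x)).
Proof. intros. apply blin_add; auto. apply blin_opp; auto. Qed.

Lemma blin_zero : is_blin V W (fun _ => nzero).
Proof.
  split; [|split].
  - intros; rewrite add0; reflexivity.
  - intros a x. rewrite <- (scal0 (V:=W) nzero) at 2. rewrite scalA.
    rewrite <- (scal0 (V:=W) nzero) at 1. f_equal. unfold Cxmult, Cx0; simpl; f_equal; ring.
  - exists 0. intro x. rewrite norm0. lra.
Qed.
End Comb.

Lemma blin_id {V : NS} {HV : Ban V} : is_blin V V (fun x => x).
Proof. split; [|split]; auto. exists 1. intros; lra. Qed.

Section Prod.
Context {U X Y : NS} {HU : Ban U} {HX : Ban X} {HY : Ban Y}.
Lemma blin_pair (f : U -> X) (g : U -> Y) : is_blin U X f -> is_blin U Y g ->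
  is_blin U (prodNS X Y) (fun u => (f u, g u)).
Proof.
  intros hf hg. destruct (blin_bnd f hf) as [c1 [h1p h1]]. destruct (blin_bnd g hg) as [c2 [h2p h2]].
  split; [|split].
  - intros x y; simpl. rewrite (lin_add f), (lin_add g); auto.
  - intros a x; simpl. rewrite (lin_scal f), (lin_scal g); auto.
  - exists (c1 + c2). intro x; simpl. specialize (h1 x); specialize (h2 x). lra.
Qed.
Lemma blin_fst : is_blin (prodNS X Y) X fst.
Proof. split; [|split]; auto. exists 1. intros [x y]; simpl. pose proof (norm_ge0 y); lra. Qed.
Lemma blin_snd : is_blin (prodNS X Y) Y snd.
Proof. split; [|split]; auto. exists 1. intros [x y]; simpl. pose proof (norm_ge0 x); lra. Qed.
End Prod.

Lemma INR_le_pow2 n : INR n <= 2 ^ n.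
Proof.
  induction n. simpl; lra. rewrite S_INR. simpl.
  pose proof (pow_R1_Rle 2 n ltac:(lra)). lra.
Qed.

Lemma pow2_big K : exists N, forall n, (N <= n)%nat -> K < 2 ^ n.
Proof.
  destruct (INR_archimed 1 K ltac:(lra)) as [N hN]. exists N. intros n hn.
  apply le_INR in hn. pose proof (INR_le_pow2 n). lra.
Qed.

Definition qb (V : NS) (T : V -> V) : Prop :=
  forall r, 0 < r -> exists K, 0 <= K /\ forall n x, nnorm (Nat.iter n T x) <= K * r ^ n * nnorm x.

Section Q.
Context {V : NS} {HV : Ban V}.

Lemma iter_blin (T : V -> V) n : is_blin V V T -> is_blin V V (Nat.iter n T).
Proof.
  intro hT. induction n; simpl.
  - apply blin_id.
  - apply (blin_comp T (Nat.iter n T)); auto.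
Qed.

Lemma iter_bnd (T : V -> V) c : 0 <= c -> (forall x, nnorm (T x) <= c * nnorm x) ->
  forall n x, nnorm (Nat.iter n T x) <= c ^ n * nnorm x.
Proof.
  intros hc h n. induction n; intro x; simpl.
  - lra.
  - eapply Rle_trans. apply h. rewrite Rmult_assoc. apply Rmult_le_compat_l; auto.
Qed.

Lemma qb_of_eventually (T : V -> V) : is_blin V V T ->
  (forall r, 0 < r -> exists N, forall n x, (N <= n)%nat -> nnorm (Nat.iter n T x) <= r ^ n * nnorm x) ->
  qb V T.
Proof.
  intros hT hev r hr. destruct (hev r hr) as [N hN].
  destruct (blin_bnd T hT) as [c [hc0 hc]].
  assert (h1 : 1 <= 1 + c / r) by (assert (0 <= c / r) by (unfold Rdiv; apply Rmult_le_pos; [lra | left; apply Rinv_0_lt_compat; lra]); lra).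
  exists ((1 + c / r) ^ N). split. pose proof (pow_R1_Rle _ N h1); lra.
  intros n x. pose proof (norm_ge0 x).
  destruct (le_lt_dec N n) as [hn|hn].
  - eapply Rle_trans. apply hN; auto.
    pose proof (pow_R1_Rle _ N h1). pose proof (pow_le r n ltac:(lra)).
    apply Rmult_le_compat_r; auto. nra.
  - apply Rle_trans with (c ^ n * nnorm x). apply iter_bnd; auto.
    apply Rmult_le_compat_r; auto.
    assert (e : r + c = r * (1 + c / r)) by (field; lra).
    apply Rle_trans with ((r + c) ^ n). apply pow_incr; lra.
    rewrite e, Rpow_mult_distr, Rmult_comm. apply Rmult_le_compat_r. apply pow_le; lra.
    apply Rle_pow; auto; lia.
Qed.

Lemma qnil_qb (T : V -> V) : is_blin V V T -> quasinilpotent V T -> qb V T.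
Proof.
  intros hT hq. apply qb_of_eventually; auto. intros r hr.
  destruct (hq r hr) as [N hN]. exists N. intros n x hn.
  destruct (hN n hn) as [c [hc1 hc2]]. eapply Rle_trans. apply hc2.
  apply Rmult_le_compat_r. apply norm_ge0. lra.
Qed.

Lemma qb_qnil (T : V -> V) : qb V T -> quasinilpotent V T.
Proof.
  intros hq eps he. destruct (hq (eps / 2) ltac:(lra)) as [K [hK hb]].
  destruct (pow2_big K) as [N hN]. exists N. intros n hn.
  exists (K * (eps / 2) ^ n). split.
  - specialize (hN n hn).
    assert (e : eps ^ n = (eps / 2) ^ n * 2 ^ n).
    { rewrite <- Rpow_mult_distr. f_equal. field. }
    rewrite e. pose proof (pow_lt (eps / 2) n ltac:(lra)). nra.
  - intro x. apply hb.
Qed.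

Lemma nilp_qb (T : V -> V) k : is_blin V V T -> (forall x, Nat.iter k T x = nzero) -> qb V T.
Proof.
  intros hT hk. apply qb_of_eventually; auto. intros r hr. exists k. intros n x hn.
  replace n with ((n - k) + k)%nat by lia. rewrite Nat.iter_add, hk.
  rewrite (lin0 _ (iter_blin T (n - k) hT)), norm0. pose proof (norm_ge0 x).
  pose proof (pow_le r (n - k + k) ltac:(lra)). nra.
Qed.

Lemma qb_shift (h : V -> V) :
  (forall r, 0 < r -> exists C, 0 <= C /\ forall n v, nnorm (Nat.iter (S n) h v) <= C * r ^ n * nnorm v) ->
  qb V h.
Proof.
  intros H r hr. destruct (H r hr) as [C [hC hb]]. exists (Rmax 1 (C / r)). split.
  { pose proof (Rmax_l 1 (C / r)); lra. }
  intros [|n] v; pose proof (norm_ge0 v).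
  - simpl. pose proof (Rmax_l 1 (C / r)). nra.
  - eapply Rle_trans. apply hb. apply Rmult_le_compat_r; auto.
    simpl. pose proof (Rmax_r 1 (C / r)). pose proof (pow_le r n ltac:(lra)).
    replace (C * r ^ n) with ((C / r) * (r * r ^ n)) by (field; lra).
    apply Rmult_le_compat_r. nra. auto.
Qed.
End Q.

Lemma gd_ext (V : NS) (f g : V -> V) : (forall v, f v = g v) -> has_gdrazin V f -> has_gdrazin V g.
Proof. intros h. replace g with f; auto. apply functional_extensionality; auto. Qed.

Lemma qnil_ext (V : NS) (f g : V -> V) : (forall v, f v = g v) -> quasinilpotent V f -> quasinilpotent V g.
Proof. intros h. replace g with f; auto. apply functional_extensionality; auto. Qed.

Lemma gd_nilp {V : NS} {HV : Ban V} (T : V -> V) k : is_blin V V T ->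
  (forall x, Nat.iter k T x = nzero) -> has_gdrazin V T.
Proof.
  intros hT hk. exists (fun _ => nzero). split; [apply blin_zero|]. split; [|split].
  - reflexivity.
  - intro v. apply lin0; auto.
  - apply qnil_ext with T. intro v. rewrite !(lin0 T hT), sub0. reflexivity.
    apply qb_qnil. apply (nilp_qb T k); auto.
Qed.

Section Cline.
Context {V W : NS} {HV : Ban V} {HW : Ban W}.

Lemma iter_conj (Sm : W -> V) (e : W -> W) (Rm : V -> W) n v :
  Nat.iter (S n) (fun v => Sm (e (Rm v))) v = Sm (Nat.iter n (fun u => e (Rm (Sm u))) (e (Rm v))).
Proof.
  induction n. reflexivity.
  change (Nat.iter (S (S n)) (fun v => Sm (e (Rm v))) v) with
    (Sm (e (Rm (Nat.iter (S n) (fun v => Sm (e (Rm v))) v)))).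
  rewrite IHn. reflexivity.
Qed.

Lemma cline (Sm : W -> V) (Rm : V -> W) : is_blin W V Sm -> is_blin V W Rm ->
  has_gdrazin W (fun w => Rm (Sm w)) -> has_gdrazin V (fun v => Sm (Rm v)).
Proof.
  intros hS hR [x [hx [h1 [h2 h3]]]].
  assert (hRS : is_blin W W (fun w => Rm (Sm w))) by (apply blin_comp; auto).
  exists (fun v => Sm (x (x (Rm v)))). split.
  { apply blin_comp; auto. apply blin_comp; auto. apply blin_comp; auto. }
  split; [|split].
  - intro v. f_equal. set (w := Rm v).
    assert (e : x (Rm (Sm (Rm (Sm (x (x w)))))) = x w).
    { rewrite (h2 (x w)), h1, h1. reflexivity. }
    rewrite e; try reflexivity.
  - intro v. f_equal. rewrite (h2 (x (Rm v))), (h2 (Rm v)). try reflexivity.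
  - set (e := fun u => nsub u (Rm (Sm (x u)))).
    assert (he : is_blin W W e) by (apply blin_sub; [apply blin_id | apply blin_comp; [auto | apply blin_comp; auto]]).
    apply qnil_ext with (fun v => Sm (e (Rm v))).
    { intro v0. unfold e. rewrite <- (linB Sm hS). f_equal. f_equal.
      rewrite (h2 (x (Rm v0))), h1. reflexivity. }
    apply qb_qnil.
    apply qb_shift. intros r hr.
    assert (hq := qnil_qb _ (blin_sub _ _ hRS (blin_comp _ _ hRS (blin_comp _ _ hRS hx))) h3 r hr).
    destruct hq as [K [hK hq]].
    destruct (blin_bnd Sm hS) as [cS [hcS bS]].
    destruct (blin_bnd Rm hR) as [cR [hcR bR]].
    destruct (blin_bnd e he) as [ce [hce be]].
    exists (cS * K * ce * cR). split. repeat apply Rmult_le_pos; auto.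
    intros n v. rewrite iter_conj.
    assert (eq : (fun u => e (Rm (Sm u))) = (fun w => nsub (Rm (Sm w)) (Rm (Sm (Rm (Sm (x w))))))).
    { apply functional_extensionality. intro u. unfold e. rewrite (h2 u). reflexivity. }
    rewrite eq.
    eapply Rle_trans. apply bS. apply Rle_trans with (cS * (K * r ^ n * nnorm (e (Rm v)))). apply Rmult_le_compat_l; auto.
    pose proof (be (Rm v)). pose proof (bR v). pose proof (norm_ge0 v).
    pose proof (pow_le r n ltac:(lra)). pose proof (norm_ge0 (Rm v)).
    pose proof (norm_ge0 (e (Rm v))).
    assert (nnorm (e (Rm v)) <= ce * cR * nnorm v) by nra.
    assert (0 <= cS * K * r ^ n) by (repeat apply Rmult_le_pos; auto).
    replace (cS * (K * r ^ n * nnorm (e (Rm v)))) with (cS * K * r ^ n * nnorm (e (Rm v))) by ring.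
    replace (cS * K * ce * cR * r ^ n * nnorm v) with (cS * K * r ^ n * (ce * cR * nnorm v)) by ring.
    apply Rmult_le_compat_l; auto.
Qed.
End Cline.

Section Tri.
Context {X Y : NS} {HX : Ban X} {HY : Ban Y}.

Lemma norm_prod (p : prodNS X Y) : nnorm p = nnorm (fst p) + nnorm (snd p).
Proof. reflexivity. Qed.

Lemma tri_qb (L : prodNS X Y -> prodNS X Y) (a : X -> X) (d : Y -> Y) :
  is_blin _ _ L -> is_blin X X a -> is_blin Y Y d -> qb X a -> qb Y d ->
  (forall x y, fst (L (x, y)) = a x) -> (forall y, snd (L (nzero, y)) = d y) ->
  qb (prodNS X Y) L.
Proof.
  intros hL ha hd qa qd hf hs.
  assert (L0 : forall y, L (nzero, y) = (nzero, d y)).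
  { intro y. rewrite <- (hs y). destruct (L (nzero, y)) as [u w] eqn:E. simpl. f_equal.
    rewrite <- (lin0 a ha), <- (hf nzero y), E. reflexivity. }
  assert (ifst : forall n p, fst (Nat.iter n L p) = Nat.iter n a (fst p)).
  { induction n; intro p. reflexivity.
    change (Nat.iter (S n) L p) with (L (Nat.iter n L p)).
    change (Nat.iter (S n) a (fst p)) with (a (Nat.iter n a (fst p))).
    rewrite <- IHn. destruct (Nat.iter n L p) as [u w]. apply hf. }
  assert (i0y : forall n y, Nat.iter n L (nzero, y) = (nzero, Nat.iter n d y)).
  { induction n; intro y. reflexivity.
    change (Nat.iter (S n) L (nzero, y)) with (L (Nat.iter n L (nzero, y))).
    rewrite IHn, L0. reflexivity. }
  set (W := fun x => snd (L (x, nzero))).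
  assert (hW : is_blin X Y W).
  { unfold W. apply blin_comp with (f := @snd X Y) (g := fun x => L (x, nzero)). apply blin_snd.
    apply blin_comp with (f := L) (g := fun x : X => (x, @nzero Y)); auto.
    apply blin_pair. apply blin_id. apply blin_zero. }
  assert (Lx0 : forall x, L (x, nzero) = @nadd (prodNS X Y) (a x, nzero) (nzero, W x)).
  { intro x. unfold W. destruct (L (x, nzero)) as [u w] eqn:E. simpl.
    rewrite add0, add0l. f_equal. rewrite <- (hf x nzero), E. reflexivity. }
  assert (hLn : forall n, is_blin _ _ (Nat.iter n L)) by (intro n; apply iter_blin; auto).
  assert (rec : forall n x, snd (Nat.iter (S n) L (x, nzero)) =
                            nadd (snd (Nat.iter n L (a x, nzero))) (Nat.iter n d (W x))).
  { intros n x. rewrite Nat.iter_succ_r, Lx0, (lin_add _ (hLn n)), i0y. reflexivity. }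
  assert (hsplit : forall n x y, Nat.iter n L (x, y) = @nadd (prodNS X Y) (Nat.iter n L (x, nzero)) (Nat.iter n L (nzero, y))).
  { intros n x y. rewrite <- (lin_add _ (hLn n)). simpl. rewrite add0, add0l. reflexivity. }
  intros r' hr'. set (r := r' / 2).
  assert (hr : 0 < r) by (unfold r; lra).
  destruct (qa r hr) as [Ka [hKa ba]]. destruct (qd r hr) as [Kd [hKd bd]].
  destruct (blin_bnd W hW) as [cW [hcW bW]].
  set (C := Kd * cW * Ka / r).
  assert (hC : 0 <= C) by (unfold C; apply Rmult_le_pos; [repeat apply Rmult_le_pos; auto | left; apply Rinv_0_lt_compat; auto]).
  assert (claim : forall n m x, nnorm (snd (Nat.iter n L (Nat.iter m a x, nzero))) <= INR n * C * r ^ (n + m) * nnorm x).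
  { induction n; intros m x.
    - simpl. rewrite norm0. pose proof (norm_ge0 x). lra.
    - rewrite rec. eapply Rle_trans. apply norm_tri.
      specialize (IHn (S m) x). simpl Nat.iter in IHn at 1.
      assert (b2 : nnorm (Nat.iter n d (W (Nat.iter m a x))) <= Kd * r ^ n * (cW * (Ka * r ^ m * nnorm x))).
      { eapply Rle_trans. apply bd. apply Rmult_le_compat_l. pose proof (pow_le r n); nra.
        eapply Rle_trans. apply bW. apply Rmult_le_compat_l; auto. }
      rewrite Nat.add_succ_r in IHn. rewrite S_INR.
      replace (S n + m)%nat with (S (n + m)) by lia. simpl pow. simpl pow in IHn.
      rewrite pow_add in *.
      assert (eC : C * r = Kd * cW * Ka) by (unfold C; field; lra).
      pose proof (norm_ge0 x). pose proof (pow_le r n ltac:(lra)). pose proof (pow_le r m ltac:(lra)).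
      replace ((INR n + 1) * C * (r * (r ^ n * r ^ m)) * nnorm x) with
        (INR n * C * (r * (r ^ n * r ^ m)) * nnorm x + (C * r) * r ^ n * r ^ m * nnorm x) by ring.
      rewrite eC. apply Rplus_le_compat. exact IHn. eapply Rle_trans. exact b2. right; ring. }
  exists (Ka + C + Kd). split. lra.
  intros n [x y]. rewrite norm_prod, ifst. simpl (fst (x, y)).
  rewrite hsplit.
  change (snd (@nadd (prodNS X Y) (Nat.iter n L (x, nzero)) (Nat.iter n L (nzero, y))))
    with (nadd (snd (Nat.iter n L (x, nzero))) (snd (Nat.iter n L (nzero, y)))).
  rewrite i0y. simpl (snd (nzero, Nat.iter n d y)). rewrite (norm_prod (x, y)). simpl (fst (x,y)); simpl (snd (x,y)).
  pose proof (ba n x) as B1. pose proof (bd n y) as B3.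
  pose proof (claim n 0%nat x) as B2. simpl Nat.iter in B2. rewrite Nat.add_0_r in B2.
  pose proof (norm_tri (snd (Nat.iter n L (x, nzero))) (Nat.iter n d y)) as T.
  assert (E : r ^ n * 2 ^ n = r' ^ n) by (rewrite <- Rpow_mult_distr; f_equal; unfold r; field).
  pose proof (INR_le_pow2 n). pose proof (pow_R1_Rle 2 n ltac:(lra)).
  pose proof (pow_le r n ltac:(lra)).
  assert (A1 : r ^ n <= r' ^ n) by nra.
  assert (A2 : INR n * r ^ n <= r' ^ n) by nra.
  pose proof (norm_ge0 x). pose proof (norm_ge0 y). pose proof (pos_INR n).
  assert (Ka * r ^ n * nnorm x <= Ka * r' ^ n * nnorm x).
  { apply Rmult_le_compat_r; auto. apply Rmult_le_compat_l; auto. }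
  assert (Kd * r ^ n * nnorm y <= Kd * r' ^ n * nnorm y).
  { apply Rmult_le_compat_r; auto. apply Rmult_le_compat_l; auto. }
  assert (INR n * C * r ^ n * nnorm x <= C * r' ^ n * nnorm x).
  { replace (INR n * C * r ^ n) with (C * (INR n * r ^ n)) by ring.
    apply Rmult_le_compat_r; auto. apply Rmult_le_compat_l; auto. }
  assert (0 <= Ka * r' ^ n * nnorm y) by (pose proof (pow_le r' n ltac:(lra)); repeat apply Rmult_le_pos; auto).
  assert (0 <= Kd * r' ^ n * nnorm x) by (pose proof (pow_le r' n ltac:(lra)); repeat apply Rmult_le_pos; auto).
  assert (0 <= C * r' ^ n * nnorm y) by (pose proof (pow_le r' n ltac:(lra)); apply Rmult_le_pos; [apply Rmult_le_pos; [exact hC | assumption] | assumption]).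
  replace ((Ka + C + Kd) * r' ^ n * (nnorm x + nnorm y)) with
    (Ka * r' ^ n * nnorm x + Ka * r' ^ n * nnorm y + C * r' ^ n * nnorm x + C * r' ^ n * nnorm y
     + Kd * r' ^ n * nnorm x + Kd * r' ^ n * nnorm y) by ring.
  eapply Rle_trans. apply Rplus_le_compat. exact B1. eapply Rle_trans. exact T. apply Rplus_le_compat. exact B2. exact B3. lra.
Qed.
End Tri.

Section Lim.
Context {V : NS} {HV : Ban V}.

Definition lim_to (u : nat -> V) (l : V) :=
  forall eps, 0 < eps -> exists N, forall n, (N <= n)%nat -> nnorm (nsub (u n) l) < eps.

Lemma le_of_eps (a b : R) : (forall eps, 0 < eps -> a < b + eps) -> a <= b.
Proof. intro h. destruct (Rle_lt_dec a b) as [h1|h1]; auto. specialize (h ((a - b)/2) ltac:(lra)). lra. Qed.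

Lemma lim_unique u l1 l2 : lim_to u l1 -> lim_to u l2 -> l1 = l2.
Proof.
  intros h1 h2. apply sub_eq. apply norm_eq0.
  apply Rle_antisym; [|apply norm_ge0].
  apply le_of_eps. intros eps he.
  destruct (h1 (eps/2) ltac:(lra)) as [N1 hN1]. destruct (h2 (eps/2) ltac:(lra)) as [N2 hN2].
  specialize (hN1 (max N1 N2) ltac:(lia)). specialize (hN2 (max N1 N2) ltac:(lia)).
  pose proof (norm_sub_tri l1 (u (max N1 N2)) l2). rewrite norm_sub_sym in hN1 at 1. lra.
Qed.

Lemma sub_add (a b c d : V) : nsub (nadd a b) (nadd c d) = nadd (nsub a c) (nsub b d).
Proof. unfold nsub. rewrite oppD, <- addA, (addCA b), addA. reflexivity. Qed.

Lemma lim_add u v l m : lim_to u l -> lim_to v m -> lim_to (fun n => nadd (u n) (v n)) (nadd l m).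
Proof.
  intros h1 h2 eps he.
  destruct (h1 (eps/2) ltac:(lra)) as [N1 hN1]. destruct (h2 (eps/2) ltac:(lra)) as [N2 hN2].
  exists (max N1 N2). intros n hn. rewrite sub_add. eapply Rle_lt_trans. apply norm_tri.
  specialize (hN1 n ltac:(lia)). specialize (hN2 n ltac:(lia)). lra.
Qed.

Lemma lim_const l : lim_to (fun _ => l) l.
Proof. intros eps he. exists 0%nat. intros. rewrite subrr, norm0. auto. Qed.

Lemma lim_shift u l : lim_to u l -> lim_to (fun n => u (S n)) l.
Proof. intros h eps he. destruct (h eps he) as [N hN]. exists N. intros n hn. apply hN. lia. Qed.

Lemma lim_ext u v l : (forall n, u n = v n) -> lim_to u l -> lim_to v l.
Proof. intros e h. replace v with u; auto. apply functional_extensionality; auto. Qed.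

Lemma scal_zero a : nscal a (@nzero V) = nzero.
Proof.
  apply (add_cancel_l (nscal a nzero)). rewrite <- scalDr, !add0. reflexivity.
Qed.
Lemma scal_opp a (x : V) : nscal a (nopp x) = nopp (nscal a x).
Proof. apply opp_unique. rewrite <- scalDr, addN. apply scal_zero. Qed.

Lemma lim_scal a u l : lim_to u l -> lim_to (fun n => nscal a (u n)) (nscal a l).
Proof.
  intros h eps he.
  assert (hm : 0 <= Cxmod a) by (unfold Cxmod; apply sqrt_pos).
  destruct (h (eps / (Cxmod a + 1))) as [N hN].
  { apply Rdiv_lt_0_compat; lra. }
  exists N. intros n hn.
  replace (nsub (nscal a (u n)) (nscal a l)) with (nscal a (nsub (u n) l)).
  2:{ unfold nsub. rewrite scalDr, scal_opp. reflexivity. }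
  rewrite norm_scal. specialize (hN n hn).
  pose proof (norm_ge0 (nsub (u n) l)).
  assert (e : eps = (eps / (Cxmod a + 1)) * (Cxmod a + 1)) by (field; lra).
  rewrite e. nra.
Qed.
End Lim.

Lemma lim_lin {V W : NS} {HV : Ban V} {HW : Ban W} (T : V -> W) u l :
  is_blin V W T -> lim_to u l -> lim_to (fun n => T (u n)) (T l).
Proof.
  intros hT h eps he. destruct (blin_bnd T hT) as [c [hc bc]].
  destruct (h (eps / (c + 1))) as [N hN]. { apply Rdiv_lt_0_compat; lra. }
  exists N. intros n hn. rewrite <- (linB T hT). eapply Rle_lt_trans. apply bc.
  specialize (hN n hn). pose proof (norm_ge0 (nsub (u n) l)).
  assert (e : eps = (eps / (c + 1)) * (c + 1)) by (field; lra).
  rewrite e. nra.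
Qed.

Section Series.
Context {X Y : NS} {HX : Ban X} {HY : Ban Y}.
Variables (F : Y -> Y) (G : X -> X) (Hm : X -> Y).
Hypotheses (hF : is_blin Y Y F) (hG : is_blin X X G) (hH : is_blin X Y Hm).

Definition term n x := Nat.iter n F (Hm (Nat.iter n G x)).
Fixpoint psum N x : Y := match N with O => nzero | S N => nadd (psum N x) (term N x) end.

Lemma term_blin n : is_blin X Y (term n).
Proof.
  unfold term. apply blin_comp with (f := Nat.iter n F) (g := fun x => Hm (Nat.iter n G x)).
  apply iter_blin; auto. apply blin_comp with (f := Hm) (g := Nat.iter n G); auto. apply iter_blin; auto.
Qed.

Lemma psum_rec N x : psum (S N) x = nadd (Hm x) (F (psum N (G x))).
Proof.
  revert x; induction N; intro x.
  - simpl. rewrite (lin0 F hF), add0, add0l. reflexivity.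
  - change (psum (S (S N)) x) with (nadd (psum (S N) x) (term (S N) x)).
    rewrite IHN. simpl psum. rewrite (lin_add F hF), <- addA. f_equal. f_equal.
    unfold term. rewrite (Nat.iter_succ_r N _ G). reflexivity.
Qed.

Lemma psum_add N x y : psum N (nadd x y) = nadd (psum N x) (psum N y).
Proof.
  induction N; simpl. rewrite add0; reflexivity.
  rewrite IHN, (lin_add _ (term_blin N)). rewrite <- !addA. f_equal. apply addCA.
Qed.

Lemma psum_scal N a x : psum N (nscal a x) = nscal a (psum N x).
Proof.
  induction N; simpl. rewrite scal_zero; reflexivity.
  rewrite IHN, (lin_scal _ (term_blin N)), scalDr. reflexivity.
Qed.

Variables (K rho : R).
Hypotheses (hK : 0 <= K) (hr0 : 0 <= rho) (hr1 : rho < 1)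
  (hb : forall n x, nnorm (term n x) <= K * rho ^ n * nnorm x).

Lemma psum_cauchy N k x : nnorm (nsub (psum (N + k) x) (psum N x)) <= K * rho ^ N * (1 - rho ^ k) / (1 - rho) * nnorm x.
Proof.
  induction k.
  - rewrite Nat.add_0_r, subrr, norm0. simpl. replace (1 - 1) with 0 by ring.
    pose proof (norm_ge0 x). replace (K * rho ^ N * 0 / (1 - rho) * nnorm x) with 0 by (field; lra). lra.
  - rewrite Nat.add_succ_r. simpl psum.
    replace (nsub (nadd (psum (N + k) x) (term (N + k) x)) (psum N x))
      with (nadd (nsub (psum (N + k) x) (psum N x)) (term (N + k) x)).
    2:{ unfold nsub. rewrite addAC. reflexivity. }
    eapply Rle_trans. apply norm_tri. specialize (hb (N + k)%nat x).
    rewrite pow_add in hb.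
    assert (e : K * rho ^ N * (1 - rho ^ S k) / (1 - rho) * nnorm x =
                K * rho ^ N * (1 - rho ^ k) / (1 - rho) * nnorm x + K * (rho ^ N * rho ^ k) * nnorm x)
      by (simpl; field; lra).
    rewrite e. lra.
Qed.

Lemma psum_bnd N x : nnorm (psum N x) <= K / (1 - rho) * nnorm x.
Proof.
  pose proof (psum_cauchy 0 N x) as h. simpl in h. rewrite sub0 in h.
  eapply Rle_trans. apply h. pose proof (norm_ge0 x). pose proof (pow_le rho N hr0).
  apply Rmult_le_compat_r; auto. unfold Rdiv. rewrite Rmult_1_r.
  apply Rmult_le_compat_r. left; apply Rinv_0_lt_compat; lra. nra.
Qed.

Lemma psum_lim x : exists l, lim_to (fun n => psum n x) l.
Proof.
  apply complete. intros eps he.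
  assert (hA : 0 <= K / (1 - rho) * nnorm x).
  { apply Rmult_le_pos. apply Rmult_le_pos; auto. left; apply Rinv_0_lt_compat; lra. apply norm_ge0. }
  destruct (pow_lt_1_zero rho ltac:(rewrite Rabs_pos_eq; lra) ((eps / 2) / (K / (1 - rho) * nnorm x + 1)))
    as [N hN]. { apply Rdiv_lt_0_compat; lra. }
  exists N.
  assert (key : forall m, (N <= m)%nat -> nnorm (nsub (psum m x) (psum N x)) < eps / 2).
  { intros m hm. replace m with (N + (m - N))%nat by lia.
    eapply Rle_lt_trans. apply psum_cauchy.
    specialize (hN N ltac:(lia)). rewrite Rabs_pos_eq in hN by (apply pow_le; auto).
    pose proof (pow_le rho (m - N) hr0).
    assert (h1 : K * rho ^ N * (1 - rho ^ (m - N)) / (1 - rho) * nnorm x <= rho ^ N * (K / (1 - rho) * nnorm x)).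
    { unfold Rdiv. pose proof (pow_le rho N hr0). pose proof (norm_ge0 x).
      assert (0 <= / (1 - rho)) by (left; apply Rinv_0_lt_compat; lra).
      replace (K * rho ^ N * (1 - rho ^ (m - N)) * / (1 - rho) * nnorm x) with
        ((rho ^ N * (K * / (1 - rho) * nnorm x)) * (1 - rho ^ (m - N))) by ring.
      assert (0 <= rho ^ N * (K * / (1 - rho) * nnorm x)) by (repeat apply Rmult_le_pos; auto).
      nra. }
    eapply Rle_lt_trans. apply h1.
    assert (ee : eps / 2 = ((eps / 2) / (K / (1 - rho) * nnorm x + 1)) * (K / (1 - rho) * nnorm x + 1)) by (assert (gg : forall a c, c <> 0 -> a = a / c * c) by (intros; field; auto); apply gg; lra).
    assert (rho ^ N * (K / (1 - rho) * nnorm x) < eps / 2).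
    { rewrite ee. pose proof (pow_le rho N hr0). nra. }
    lra. }
  intros m n hm hn. pose proof (key m hm) as k1. pose proof (key n hn) as k2.
  pose proof (norm_sub_tri (psum m x) (psum N x) (psum n x)) as k3. rewrite (norm_sub_sym (psum N x)) in k3.
  lra.
Qed.

Definition Zs (x : X) : Y := proj1_sig (constructive_indefinite_description _ (psum_lim x)).
Lemma Zs_lim x : lim_to (fun n => psum n x) (Zs x).
Proof. unfold Zs. destruct (constructive_indefinite_description _ (psum_lim x)). auto. Qed.

Lemma Zs_blin : is_blin X Y Zs.
Proof.
  split; [|split].
  - intros x y. apply (lim_unique (fun n => psum n (nadd x y))). apply Zs_lim.
    apply lim_ext with (fun n => nadd (psum n x) (psum n y)). intro n; rewrite psum_add; auto.
    apply lim_add; apply Zs_lim.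
  - intros a x. apply (lim_unique (fun n => psum n (nscal a x))). apply Zs_lim.
    apply lim_ext with (fun n => nscal a (psum n x)). intro n; rewrite psum_scal; auto.
    apply lim_scal; apply Zs_lim.
  - exists (K / (1 - rho)). intro x. apply le_of_eps. intros eps he.
    destruct (Zs_lim x eps he) as [N hN]. specialize (hN N (le_n N)).
    pose proof (psum_bnd N x) as k1. pose proof (norm_sub_tri (Zs x) (psum N x) nzero) as k2.
    rewrite !sub0, norm_sub_sym in k2. lra.
Qed.

Lemma Zs_fix x : Zs x = nadd (Hm x) (F (Zs (G x))).
Proof.
  apply (lim_unique (fun n => psum (S n) x)). apply (lim_shift (fun n => psum n x)), Zs_lim.
  apply lim_ext with (fun n => nadd (Hm x) (F (psum n (G x)))). intro n; rewrite psum_rec; auto.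
  apply lim_add. apply lim_const. apply lim_lin; auto. apply Zs_lim.
Qed.
End Series.

Lemma series_fix {X Y : NS} {HX : Ban X} {HY : Ban Y} (F : Y -> Y) (G : X -> X) (Hm : X -> Y) :
  is_blin Y Y F -> is_blin X X G -> is_blin X Y Hm ->
  forall K rho, 0 <= K -> 0 <= rho -> rho < 1 ->
  (forall n x, nnorm (Nat.iter n F (Hm (Nat.iter n G x))) <= K * rho ^ n * nnorm x) ->
  exists Z, is_blin X Y Z /\ forall x, Z x = nadd (Hm x) (F (Z (G x))).
Proof.
  intros hF hG hH K rho hK h0 h1 hb. exists (Zs F G Hm K rho hK h0 h1 hb). split.
  apply Zs_blin; auto. apply Zs_fix; auto.
Qed.

Section Proj.
Context {V : NS} {HV : Ban V}.
Variables (T t : V -> V).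
Hypotheses (hT : is_blin V V T) (ht : is_blin V V t)
  (h1 : forall v, t (T (t v)) = t v) (h2 : forall v, T (t v) = t (T v)).

Definition pT x := T (t x).
Definition piT x := nsub x (pT x).

Lemma pT_blin : is_blin V V pT.
Proof. unfold pT. apply blin_comp with (f := T) (g := t); auto. Qed.
Lemma piT_blin : is_blin V V piT.
Proof. unfold piT. apply blin_sub. apply blin_id. apply pT_blin. Qed.

Lemma P1 x : t (pT x) = t x. Proof. apply h1. Qed.
Lemma P2 x : pT (t x) = t x. Proof. unfold pT. rewrite h2. apply h1. Qed.
Lemma P3 x : pT (pT x) = pT x. Proof. unfold pT at 1. fold (pT x). rewrite P1. reflexivity. Qed.
Lemma P4 x : T (pT x) = pT (T x). Proof. unfold pT. rewrite h2. reflexivity. Qed.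
Lemma P5 x : t (T x) = pT x. Proof. unfold pT. rewrite h2. reflexivity. Qed.
Lemma pi1 x : pT (piT x) = nzero.
Proof. unfold piT. rewrite (linB _ pT_blin), P3. apply subrr. Qed.
Lemma pi2 x : piT (pT x) = nzero.
Proof. unfold piT. rewrite P3. apply subrr. Qed.
Lemma pi3 x : piT (piT x) = piT x.
Proof. unfold piT at 1. rewrite pi1, sub0. reflexivity. Qed.
Lemma pi4 x : T (piT x) = piT (T x).
Proof. unfold piT. rewrite (linB _ hT), P4. reflexivity. Qed.
Lemma pi5 x : t (piT x) = nzero.
Proof. unfold piT. rewrite (linB _ ht), P1. apply subrr. Qed.
Lemma pi_pT x : nadd (piT x) (pT x) = x.
Proof. unfold piT, nsub. apply addNKr. Qed.

Definition qT v := nsub (T v) (T (T (t v))).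
Lemma qT_eq v : qT v = T (piT v).
Proof. unfold qT, piT. rewrite (linB _ hT). reflexivity. Qed.
Lemma iter_pi n x : Nat.iter n T (piT x) = piT (Nat.iter n T x).
Proof.
  induction n. reflexivity.
  change (Nat.iter (S n) T (piT x)) with (T (Nat.iter n T (piT x))). rewrite IHn, pi4. reflexivity.
Qed.
Lemma iter_qT n x : Nat.iter n T (piT x) = Nat.iter n qT (piT x).
Proof.
  induction n. reflexivity.
  change (Nat.iter (S n) qT (piT x)) with (qT (Nat.iter n qT (piT x))).
  change (Nat.iter (S n) T (piT x)) with (T (Nat.iter n T (piT x))).
  rewrite <- IHn, qT_eq, (iter_pi n x), pi3. reflexivity.
Qed.
Lemma qT_blin : is_blin V V qT.
Proof.
  unfold qT. apply blin_sub; auto. apply blin_comp with (f := T) (g := fun v => T (t v)); auto.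
  apply blin_comp with (f := T) (g := t); auto.
Qed.

Lemma pi_decay : quasinilpotent V qT ->
  forall r, 0 < r -> exists K, 0 <= K /\ forall n x, nnorm (Nat.iter n T (piT x)) <= K * r ^ n * nnorm x.
Proof.
  intros hq r hr. destruct (qnil_qb _ qT_blin hq r hr) as [K [hK hb]].
  destruct (blin_bnd _ piT_blin) as [c [hc bc]].
  exists (K * c). split. apply Rmult_le_pos; auto. intros n x.
  rewrite iter_qT. eapply Rle_trans. apply hb.
  pose proof (pow_le r n ltac:(lra)). pose proof (bc x).
  replace (K * c * r ^ n * nnorm x) with (K * r ^ n * (c * nnorm x)) by ring.
  apply Rmult_le_compat_l. apply Rmult_le_pos; auto. auto.
Qed.
End Proj.

Section G. Context {V : NS} {HV : Ban V}.
Lemma g2 (c t s z d q : V) :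
  nadd c (nsub (nadd (nadd (nsub t s) z) d) q) = nadd (nsub (nadd z (nadd (nsub c q) d)) s) t.
Proof. grp. Qed.
Lemma g1 (z1 z2 s e : V) :
  nadd (nsub z2 s) (nadd (nadd s (nsub z1 s)) e) = nadd (nsub (nadd z1 z2) s) e.
Proof.
  replace (nadd s (nsub z1 s)) with z1 by (unfold nsub; rewrite addCA, addN, add0; reflexivity).
  grp.
Qed.
End G.

Lemma decay_bound {X Y : NS} {HX : Ban X} {HY : Ban Y} (F : Y -> Y) (G : X -> X) (Hm : X -> Y) (cF K0 : R) :
  0 <= cF -> 0 <= K0 -> (forall y, nnorm (F y) <= cF * nnorm y) ->
  (forall n x, nnorm (Hm (Nat.iter n G x)) <= K0 * (/ (2 * (cF + 1))) ^ n * nnorm x) ->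
  forall n x, nnorm (Nat.iter n F (Hm (Nat.iter n G x))) <= K0 * (/ 2) ^ n * nnorm x.
Proof.
  intros hc hK bF bH n x.
  eapply Rle_trans. apply (iter_bnd F cF hc bF).
  eapply Rle_trans. apply Rmult_le_compat_l. apply pow_le; auto. apply bH.
  assert (hr : 0 < / (2 * (cF + 1))) by (apply Rinv_0_lt_compat; lra).
  assert (e : cF ^ n * (K0 * (/ (2 * (cF + 1))) ^ n * nnorm x) = K0 * (cF * / (2 * (cF + 1))) ^ n * nnorm x)
    by (rewrite Rpow_mult_distr; ring).
  rewrite e. pose proof (norm_ge0 x). apply Rmult_le_compat_r; auto. apply Rmult_le_compat_l; auto.
  apply pow_incr. split. apply Rmult_le_pos; lra.
  apply Rmult_le_reg_r with (2 * (cF + 1)). lra.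
  rewrite Rmult_assoc, Rinv_l by lra. field_simplify; lra.
Qed.

Section LowTri.
Context {X Y : NS} {HX : Ban X} {HY : Ban Y}.

Lemma lowtri_gd (A : X -> X) (C : X -> Y) (D : Y -> Y) :
  is_blin X X A -> is_blin X Y C -> is_blin Y Y D ->
  has_gdrazin X A -> has_gdrazin Y D ->
  has_gdrazin (prodNS X Y) (fun p => (A (fst p), nadd (C (fst p)) (D (snd p)))).
Proof.
  intros hA hC hD [a [ha [ha1 [ha2 ha3]]]] [d [hd [hd1 [hd2 hd3]]]].
  assert (AP1 : forall x, a (pT A a x) = a x) by (apply P1; auto).
  assert (AP2 : forall x, pT A a (a x) = a x) by (apply P2; auto).
  assert (AP3 : forall x, pT A a (pT A a x) = pT A a x) by (apply P3; auto).
  assert (AP5 : forall x, a (A x) = pT A a x) by (apply P5; auto).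
  assert (Api2 : forall x, piT A a (pT A a x) = nzero) by (apply pi2; auto).
  assert (Api3 : forall x, piT A a (piT A a x) = piT A a x) by (apply pi3; auto).
  assert (Api4 : forall x, A (piT A a x) = piT A a (A x)) by (apply pi4; auto).
  assert (DP2 : forall x, pT D d (d x) = d x) by (apply P2; auto).
  assert (Dpi1 : forall x, pT D d (piT D d x) = nzero) by (apply pi1; auto).
  assert (Dpi3 : forall x, piT D d (piT D d x) = piT D d x) by (apply pi3; auto).
  assert (Dpi4 : forall x, D (piT D d x) = piT D d (D x)) by (apply pi4; auto).
  assert (Aiter : forall n x, Nat.iter n A (piT A a x) = piT A a (Nat.iter n A x)) by (apply iter_pi; auto).
  assert (hpA := pT_blin A a hA ha). assert (hpiA := piT_blin A a hA ha).
  assert (hpD := pT_blin D d hD hd). assert (hpiD := piT_blin D d hD hd).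
  destruct (blin_bnd d hd) as [cd [hcd bd]].
  destruct (blin_bnd a ha) as [ca [hca ba]].
  destruct (blin_bnd C hC) as [cC [hcC bC]].
  destruct (blin_bnd _ hpiD) as [cpD [hcpD bpD]].
  destruct (pi_decay A a hA ha ha1 ha2 ha3 (/ (2 * (cd + 1)))) as [Ka [hKa dA]].
  { apply Rinv_0_lt_compat; lra. }
  destruct (series_fix d A (fun x => d (d (C (piT A a x))))) with
    (K := cd * (cd * (cC * Ka))) (rho := / 2) as [Y1 [hY1 fY1]]; auto.
  { apply blin_comp with (f := d) (g := fun x => d (C (piT A a x))); auto.
    apply blin_comp with (f := d) (g := fun x => C (piT A a x)); auto.
    apply blin_comp with (f := C) (g := piT A a); auto. }
  { repeat apply Rmult_le_pos; auto. }
  { lra. } { lra. }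
  { apply (decay_bound d A (fun x => d (d (C (piT A a x)))) cd); auto. repeat apply Rmult_le_pos; auto.
    intros n x. rewrite <- Aiter.
    replace (cd * (cd * (cC * Ka)) * (/ (2 * (cd + 1))) ^ n * nnorm x) with
      (cd * (cd * (cC * (Ka * (/ (2 * (cd + 1))) ^ n * nnorm x)))) by ring.
    eapply Rle_trans. apply bd. apply Rmult_le_compat_l; auto.
    eapply Rle_trans. apply bd. apply Rmult_le_compat_l; auto.
    eapply Rle_trans. apply bC. apply Rmult_le_compat_l; auto.
  }
  destruct (pi_decay D d hD hd hd1 hd2 hd3 (/ (2 * (ca + 1)))) as [Kd [hKd dD]].
  { apply Rinv_0_lt_compat; lra. }
  destruct (series_fix D a (fun x => piT D d (C (a (a x))))) with
    (K := Kd * (cC * (ca * ca))) (rho := / 2) as [Y2 [hY2 fY2]]; auto.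
  { apply blin_comp with (f := piT D d) (g := fun x => C (a (a x))); auto.
    apply blin_comp with (f := C) (g := fun x => a (a x)); auto.
    apply blin_comp with (f := a) (g := a); auto. }
  { repeat apply Rmult_le_pos; auto. }
  { lra. } { lra. }
  { intros n x. eapply Rle_trans. apply dD.
    eapply Rle_trans. apply Rmult_le_compat_l. apply Rmult_le_pos; auto. apply pow_le.
    left; apply Rinv_0_lt_compat; lra. apply bC.
    assert (ban : nnorm (a (a (Nat.iter n a x))) <= ca * (ca * (ca ^ n * nnorm x))).
    { eapply Rle_trans. apply ba. apply Rmult_le_compat_l; auto.
      eapply Rle_trans. apply ba. apply Rmult_le_compat_l; auto. apply iter_bnd; auto. }
    assert (hr : 0 < / (2 * (ca + 1))) by (apply Rinv_0_lt_compat; lra).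
    assert (hc2 : ca * / (2 * (ca + 1)) <= / 2).
    { apply Rmult_le_reg_r with (2 * (ca + 1)). lra.
      rewrite Rmult_assoc, Rinv_l by lra. field_simplify; lra. }
    assert (hp : (ca * / (2 * (ca + 1))) ^ n <= (/ 2) ^ n).
    { apply pow_incr. split; auto. apply Rmult_le_pos; lra. }
    rewrite Rpow_mult_distr in hp.
    pose proof (pow_le (/ (2 * (ca + 1))) n ltac:(lra)). pose proof (pow_le ca n hca).
    pose proof (norm_ge0 x).
    apply Rle_trans with (Kd * (/ (2 * (ca + 1))) ^ n * (cC * (ca * (ca * (ca ^ n * nnorm x))))).
    { apply Rmult_le_compat_l. apply Rmult_le_pos; auto. apply Rmult_le_compat_l; auto. }
    replace (Kd * (/ (2 * (ca + 1))) ^ n * (cC * (ca * (ca * (ca ^ n * nnorm x))))) with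
      (Kd * (cC * (ca * ca)) * (ca ^ n * (/ (2 * (ca + 1))) ^ n) * nnorm x) by ring.
    apply Rmult_le_compat_r; auto. apply Rmult_le_compat_l. repeat apply Rmult_le_pos; auto. auto. }
  assert (Dp : forall z, D (d z) = pT D d z) by reflexivity.
  assert (Ap : forall z, A (a z) = pT A a z) by reflexivity.
  assert (F1 : forall w, pT D d (Y1 w) = Y1 w).
  { intro w. rewrite fY1, (lin_add _ hpD), !DP2. reflexivity. }
  destruct (ex_intro (fun Z1 => is_blin X Y Z1 /\ forall x, Z1 x = Y1 (piT A a x))
              (fun x => Y1 (piT A a x)) (conj (blin_comp Y1 (piT A a) hY1 hpiA) (fun x => eq_refl)))
    as [Z1 [hZ1 eZ1]].
  assert (Z1a : forall x, Z1 (pT A a x) = nzero) by (intro x; rewrite eZ1, Api2; apply lin0; auto).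
  assert (Z1b : forall x, pT D d (Z1 x) = Z1 x) by (intro x; rewrite eZ1; apply F1).
  assert (Z1c : forall x, D (Z1 x) = nadd (d (C (piT A a x))) (Z1 (A x))).
  { intro x. rewrite !eZ1, fY1, (lin_add _ hD), !Dp, DP2, F1, Api3, Api4. reflexivity. }
  destruct (ex_intro (fun Z2 => is_blin X Y Z2 /\ forall x, Z2 x = piT D d (Y2 (pT A a x)))
              (fun x => piT D d (Y2 (pT A a x)))
              (conj (blin_comp (piT D d) (fun x => Y2 (pT A a x)) hpiD (blin_comp Y2 (pT A a) hY2 hpA))
                    (fun x => eq_refl)))
    as [Z2 [hZ2 eZ2]].
  assert (Z2a : forall x, Z2 (pT A a x) = Z2 x) by (intro x; rewrite !eZ2, AP3; reflexivity).
  assert (Z2b : forall x, pT D d (Z2 x) = nzero) by (intro x; rewrite eZ2; apply Dpi1).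
  assert (Z2c : forall x, Z2 (A x) = nadd (piT D d (C (a x))) (D (Z2 x))).
  { intro x. rewrite !eZ2, fY2.
    rewrite AP1, AP5, AP1.
    rewrite (lin_add _ hpiD), Dpi3, Dpi4. reflexivity. }
  assert (hdCa : is_blin X Y (fun x => d (C (a x)))).
  { apply blin_comp with (f := d) (g := fun x => C (a x)); auto. apply blin_comp with (f := C) (g := a); auto. }
  destruct (ex_intro (fun S => is_blin X Y S /\ forall x, S x = nsub (nadd (Z1 x) (Z2 x)) (d (C (a x))))
              (fun x => nsub (nadd (Z1 x) (Z2 x)) (d (C (a x))))
              (conj (blin_sub _ _ (blin_add _ _ hZ1 hZ2) hdCa) (fun x => eq_refl)))
    as [S [hS eS]].
  assert (E2 : forall x, nadd (C (a x)) (D (S x)) = nadd (S (A x)) (d (C x))).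
  { intro x. rewrite !eS, (linB _ hD), (lin_add _ hD), Z1c, Dp, Z2c, AP5.
    unfold piT. rewrite (linB _ hC), (linB _ hd). grp. }
  assert (E1 : forall x, nadd (S (pT A a x)) (nadd (d (C (a x))) (pT D d (S x))) = S x).
  { intro x. rewrite !eS, (linB _ hpD), (lin_add _ hpD), Z1a, Z2a, Z1b, Z2b, DP2, AP1, add0, add0l.
    replace (nadd (d (C (a x))) (nsub (Z1 x) (d (C (a x))))) with (Z1 x)
      by (unfold nsub; rewrite addCA, addN, add0; reflexivity).
    grp. }
  set (L := (fun p : prodNS X Y => (A (fst p), nadd (C (fst p)) (D (snd p)))) : prodNS X Y -> prodNS X Y).
  assert (hL : is_blin _ _ L).
  { apply blin_pair. apply blin_comp with (f := A) (g := @fst X Y); auto. apply blin_fst.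
    apply blin_add. apply blin_comp with (f := C) (g := @fst X Y); auto. apply blin_fst.
    apply blin_comp with (f := D) (g := @snd X Y); auto. apply blin_snd. }
  exists (fun p : prodNS X Y => (a (fst p), nadd (S (fst p)) (d (snd p)))).
  split; [|split; [|split]].
  - apply blin_pair. apply blin_comp with (f := a) (g := @fst X Y); auto. apply blin_fst.
    apply blin_add. apply blin_comp with (f := S) (g := @fst X Y); auto. apply blin_fst.
    apply blin_comp with (f := d) (g := @snd X Y); auto. apply blin_snd.
  - intros [x y]. unfold L; simpl. f_equal. apply ha1.
    rewrite (lin_add _ hd), (lin_add _ hD), (lin_add _ hd), hd1, <- hd2, Dp, Ap.
    rewrite (addA (d (C (a x)))), addA, E1. reflexivity.
  - intros [x y]. unfold L; simpl. f_equal. apply ha2.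
    rewrite (lin_add _ hD), (lin_add _ hd), hd2, !addA, E2. reflexivity.
  - set (Tx := (fun p : prodNS X Y => (a (fst p), nadd (S (fst p)) (d (snd p)))) : prodNS X Y -> prodNS X Y).
    assert (hTx : is_blin _ _ Tx).
    { apply blin_pair. apply blin_comp with (f := a) (g := @fst X Y); auto. apply blin_fst.
      apply blin_add. apply blin_comp with (f := S) (g := @fst X Y); auto. apply blin_fst.
      apply blin_comp with (f := d) (g := @snd X Y); auto. apply blin_snd. }
    apply qb_qnil. apply tri_qb with (a := qT A a) (d := qT D d).
    + apply blin_sub; auto. apply blin_comp with (f := L) (g := fun v => L (Tx v)); auto.
      apply blin_comp with (f := L) (g := Tx); auto.
    + apply qT_blin; auto.
    + apply qT_blin; auto.
    + apply qnil_qb. apply qT_blin; auto. exact ha3.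
    + apply qnil_qb. apply qT_blin; auto. exact hd3.
    + intros x y. reflexivity.
    + intros y. unfold L, Tx, qT; simpl.
      rewrite (lin0 _ ha), (lin0 _ hS), (lin0 _ hA), (lin0 _ hC), !add0l. reflexivity.
Qed.
End LowTri.

Lemma gd_zero {Z : NS} {HZ : Ban Z} : has_gdrazin Z (fun _ => nzero).
Proof. apply (gd_nilp _ 1). apply blin_zero. intros; reflexivity. Qed.

Lemma ab0 {Z : NS} {HZ : Ban Z} (a b : Z -> Z) : is_blin Z Z a -> is_blin Z Z b ->
  has_gdrazin Z a -> has_gdrazin Z b -> (forall z, a (b z) = nzero) ->
  has_gdrazin Z (fun z => nadd (a z) (b z)).
Proof.
  intros ha hb ga gb hab.
  apply (cline (W := prodNS Z Z) (fun p => nadd (fst p) (b (snd p))) (fun z => (a z, z))).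
  - apply blin_add. apply blin_fst. apply blin_comp with (f := b) (g := @snd Z Z); auto. apply blin_snd.
  - apply blin_pair; auto. apply blin_id.
  - apply gd_ext with (fun p : prodNS Z Z => (a (fst p), nadd (fst p) (b (snd p)))).
    { intros [u v]; simpl. rewrite (lin_add _ ha), hab, add0. reflexivity. }
    apply (lowtri_gd a (fun u => u) b); auto. apply blin_id.
Qed.

Lemma sim {Z1 Z2 : NS} {H1 : Ban Z1} {H2 : Ban Z2} (T : Z1 -> Z1) (J : Z2 -> Z1) (J' : Z1 -> Z2) :
  is_blin Z1 Z1 T -> is_blin Z2 Z1 J -> is_blin Z1 Z2 J' -> (forall z, J (J' z) = z) ->
  has_gdrazin Z2 (fun z => J' (T (J z))) -> has_gdrazin Z1 T.
Proof.
  intros hT hJ hJ' hJJ g. apply gd_ext with (fun z => J (J' (T z))). intro; apply hJJ.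
  apply (cline J (fun z => J' (T z))); auto. apply blin_comp with (f := J') (g := T); auto.
Qed.

Section M0.
Context {X Y : NS} {HX : Ban X} {HY : Ban Y}.

Lemma row_gd (A : X -> X) (B : Y -> X) : is_blin X X A -> is_blin Y X B -> has_gdrazin X A ->
  has_gdrazin (prodNS X Y) (fun p => ((nadd (A (fst p)) (B (snd p)), nzero) : prodNS X Y)).
Proof.
  intros hA hB gA.
  apply (cline (fun x : X => ((x, nzero) : prodNS X Y)) (fun p : prodNS X Y => nadd (A (fst p)) (B (snd p)))).
  - apply blin_pair. apply blin_id. apply blin_zero.
  - apply blin_add. apply blin_comp with (f := A) (g := @fst X Y); auto. apply blin_fst.
    apply blin_comp with (f := B) (g := @snd X Y); auto. apply blin_snd.
  - apply gd_ext with A; auto. intro v; simpl. rewrite (lin0 _ hB), add0. reflexivity.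
Qed.

Lemma M0_gd (A : X -> X) (B : Y -> X) (C : X -> Y) :
  is_blin X X A -> is_blin Y X B -> is_blin X Y C -> has_gdrazin X A ->
  (forall x, A (B (C x)) = nzero) -> (forall x, C (B (C x)) = nzero) ->
  has_gdrazin (prodNS X Y) (fun p => ((nadd (A (fst p)) (B (snd p)), C (fst p)) : prodNS X Y)).
Proof.
  intros hA hB hC gA hABC hCBC.
  assert (hP0 : is_blin (prodNS X Y) (prodNS X Y) (fun p : prodNS X Y => ((nadd (A (fst p)) (B (snd p)), nzero) : prodNS X Y))).
  { apply blin_pair. apply blin_add. apply blin_comp with (f := A) (g := @fst X Y); auto. apply blin_fst.
    apply blin_comp with (f := B) (g := @snd X Y); auto. apply blin_snd. apply blin_zero. }
  assert (gP0 := row_gd A B hA hB gA).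
  destruct (ex_intro (fun P => P = (fun p : prodNS X Y => ((nadd (A (fst p)) (B (snd p)), nzero) : prodNS X Y))) _ eq_refl)
    as [P eP0].
  rewrite <- eP0 in hP0, gP0. rename hP0 into hP, gP0 into gP.
  assert (eP : forall p, P p = (nadd (A (fst p)) (B (snd p)), nzero)) by (intro; rewrite eP0; reflexivity).
  clear eP0.
  assert (hU0 : is_blin (prodNS X Y) (prodNS X Y) (fun p : prodNS X Y => ((nzero, C (fst p)) : prodNS X Y))).
  { apply blin_pair. apply blin_zero. apply blin_comp with (f := C) (g := @fst X Y); auto. apply blin_fst. }
  destruct (ex_intro (fun U => U = (fun p : prodNS X Y => ((nzero, C (fst p)) : prodNS X Y))) _ eq_refl)
    as [U eU0].
  rewrite <- eU0 in hU0. rename hU0 into hU.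
  assert (eU : forall p, U p = (nzero, C (fst p))) by (intro; rewrite eU0; reflexivity).
  clear eU0.
  apply gd_ext with (fun p => nadd (P p) (U p)).
  { intros [x y]. rewrite eP, eU; simpl. rewrite add0, add0l. reflexivity. }
  apply (cline (W := prodNS (prodNS X Y) (prodNS X Y)) (fun q => nadd (fst q) (U (snd q))) (fun p => (P p, p))).
  { apply blin_add. apply blin_fst. apply blin_comp with (f := U) (g := @snd (prodNS X Y) (prodNS X Y)); auto. apply blin_snd. }
  { apply blin_pair; auto. apply blin_id. }
  set (a3 := fun q : prodNS (prodNS X Y) (prodNS X Y) => ((P (fst q), nzero) : prodNS (prodNS X Y) (prodNS X Y))).
  set (b3 := fun q : prodNS (prodNS X Y) (prodNS X Y) =>
              ((P (U (snd q)), nadd (fst q) (U (snd q))) : prodNS (prodNS X Y) (prodNS X Y))).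
  assert (ha3 : is_blin _ _ a3).
  { apply blin_pair. apply blin_comp with (f := P) (g := @fst (prodNS X Y) (prodNS X Y)); auto. apply blin_fst. apply blin_zero. }
  assert (hb3 : is_blin _ _ b3).
  { apply blin_pair. apply blin_comp with (f := P) (g := fun q => U (snd q)); auto.
    apply blin_comp with (f := U) (g := @snd (prodNS X Y) (prodNS X Y)); auto. apply blin_snd.
    apply blin_add. apply blin_fst.
    apply blin_comp with (f := U) (g := @snd (prodNS X Y) (prodNS X Y)); auto. apply blin_snd. }
  apply gd_ext with (fun q => nadd (a3 q) (b3 q)).
  { intros [u v]. unfold a3, b3. cbn [fst snd]. rewrite (lin_add _ hP).
    change (@nadd (prodNS (prodNS X Y) (prodNS X Y)) (P u, nzero) (P (U v), nadd u (U v))) with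
      ((nadd (P u) (P (U v)), nadd nzero (nadd u (U v))) : prodNS (prodNS X Y) (prodNS X Y)).
    rewrite add0l. reflexivity. }
  apply ab0; auto.
  - apply gd_ext with (fun q : prodNS (prodNS X Y) (prodNS X Y) =>
                         ((P (fst q), nadd ((fun _ => nzero) (fst q)) ((fun _ => nzero) (snd q))) : prodNS (prodNS X Y) (prodNS X Y))).
    { intros [u v]. unfold a3. cbn [fst snd]. rewrite add0. reflexivity. }
    apply (lowtri_gd P (fun _ => nzero) (fun _ => nzero)); auto. apply blin_zero. apply blin_zero. apply gd_zero.
  -
    apply gd_ext with (fun q : prodNS (prodNS X Y) (prodNS X Y) =>
       (fun r : prodNS (prodNS X Y) Y => ((((B (snd r), nzero) : prodNS X Y), nadd (fst r) ((nzero, snd r) : prodNS X Y)) : prodNS (prodNS X Y) (prodNS X Y)))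
       ((fun q : prodNS (prodNS X Y) (prodNS X Y) => ((fst q, C (fst (snd q))) : prodNS (prodNS X Y) Y)) q)).
    { intros [u [v1 v2]]. unfold b3. rewrite eU, eP; simpl. rewrite (lin0 _ hA), add0l. reflexivity. }
    apply (cline (W := prodNS (prodNS X Y) Y)
      (fun r : prodNS (prodNS X Y) Y => ((((B (snd r), nzero) : prodNS X Y), nadd (fst r) ((nzero, snd r) : prodNS X Y)) : prodNS (prodNS X Y) (prodNS X Y)))
      (fun q : prodNS (prodNS X Y) (prodNS X Y) => ((fst q, C (fst (snd q))) : prodNS (prodNS X Y) Y))).
    + apply blin_pair. apply blin_pair. apply blin_comp with (f := B) (g := @snd (prodNS X Y) Y); auto. apply blin_snd.
      apply blin_zero. apply blin_add. apply blin_fst. apply blin_pair. apply blin_zero. apply blin_snd.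
    + apply blin_pair. apply blin_fst. apply blin_comp with (f := C) (g := fun q : prodNS (prodNS X Y) (prodNS X Y) => fst (snd q)); auto.
      apply blin_comp with (f := @fst X Y) (g := @snd (prodNS X Y) (prodNS X Y)). apply blin_fst. apply blin_snd.
    + apply (gd_nilp _ 4).
      * apply blin_comp with (f := fun q : prodNS (prodNS X Y) (prodNS X Y) => ((fst q, C (fst (snd q))) : prodNS (prodNS X Y) Y))
          (g := fun r : prodNS (prodNS X Y) Y => ((((B (snd r), nzero) : prodNS X Y), nadd (fst r) ((nzero, snd r) : prodNS X Y)) : prodNS (prodNS X Y) (prodNS X Y))).
        -- apply blin_pair. apply blin_fst. apply blin_comp with (f := C) (g := fun q : prodNS (prodNS X Y) (prodNS X Y) => fst (snd q)); auto.
           apply blin_comp with (f := @fst X Y) (g := @snd (prodNS X Y) (prodNS X Y)). apply blin_fst. apply blin_snd.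
        -- apply blin_pair. apply blin_pair. apply blin_comp with (f := B) (g := @snd (prodNS X Y) Y); auto. apply blin_snd.
           apply blin_zero. apply blin_add. apply blin_fst. apply blin_pair. apply blin_zero. apply blin_snd.
      * intros [[x y] z]. simpl. rewrite !add0, !hCBC, (lin0 _ hB). reflexivity.
  - intros [u v]. unfold a3, b3. rewrite eU, eP. simpl. rewrite eP. simpl.
    rewrite (lin0 _ hA), add0l, hABC, (lin0 _ hB), add0. reflexivity.
Qed.
End M0.

Section Main.
Context {X Y : NS} {HX : Ban X} {HY : Ban Y}.

Lemma K_gd (A : X -> X) (B : Y -> X) (C : X -> Y) :
  is_blin X X A -> is_blin Y X B -> is_blin X Y C -> has_gdrazin X A ->
  (forall x, A (B (C x)) = nzero) -> (forall x, C (B (C x)) = nzero) ->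
  has_gdrazin (prodNS Y X) (fun p => ((C (snd p), nadd (B (fst p)) (A (snd p))) : prodNS Y X)).
Proof.
  intros hA hB hC gA h1 h2.
  apply (sim (Z2 := prodNS X Y) _ (fun p : prodNS X Y => ((snd p, fst p) : prodNS Y X))
           (fun p : prodNS Y X => ((snd p, fst p) : prodNS X Y))).
  - apply blin_pair. apply blin_comp with (f := C) (g := @snd Y X); auto. apply blin_snd.
    apply blin_add. apply blin_comp with (f := B) (g := @fst Y X); auto. apply blin_fst.
    apply blin_comp with (f := A) (g := @snd Y X); auto. apply blin_snd.
  - apply blin_pair. apply blin_snd. apply blin_fst.
  - apply blin_pair. apply blin_snd. apply blin_fst.
  - intros [y x]; reflexivity.
  - apply gd_ext with (fun p => ((nadd (A (fst p)) (B (snd p)), C (fst p)) : prodNS X Y)).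
    { intros [x y]; simpl. rewrite addC. reflexivity. }
    apply M0_gd; auto.
Qed.
End Main.

Theorem corollary3p9 (X Y : NS) (HX : is_cbanach X) (HY : is_cbanach Y)
  (A : X -> X) (B : Y -> X) (C : X -> Y) (D : Y -> Y)
  (hA : is_blin X X A) (hB : is_blin Y X B) (hC : is_blin X Y C) (hD : is_blin Y Y D)
  (gA : has_gdrazin X A) (gD : has_gdrazin Y D)
  (hABC : forall x : X, A (B (C x)) = nzero)
  (hCBC : forall x : X, C (B (C x)) = nzero)
  (hDCA : forall x : X, D (C (A x)) = nzero)
  (hDCB : forall y : Y, D (C (B y)) = nzero) :
  has_gdrazin (prodNS X Y) (opmat A B C D).
Proof.
  assert (BX : Ban X) by exact HX. assert (BY : Ban Y) by exact HY.
  set (V := prodNS X Y).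
  assert (hP0 : is_blin V V (fun p : V => ((nadd (A (fst p)) (B (snd p)), nzero) : V))).
  { apply blin_pair. apply blin_add. apply blin_comp with (f := A) (g := @fst X Y); auto. apply blin_fst.
    apply blin_comp with (f := B) (g := @snd X Y); auto. apply blin_snd. apply blin_zero. }
  destruct (ex_intro (fun P => P = (fun p : V => ((nadd (A (fst p)) (B (snd p)), nzero) : V))) _ eq_refl)
    as [P eP0].
  rewrite <- eP0 in hP0. rename hP0 into hP.
  assert (eP : forall p, P p = (nadd (A (fst p)) (B (snd p)), nzero)) by (intro; rewrite eP0; reflexivity).
  clear eP0.
  assert (hQ0 : is_blin V V (fun p : V => ((nzero, nadd (C (fst p)) (D (snd p))) : V))).
  { apply blin_pair. apply blin_zero. apply blin_add. apply blin_comp with (f := C) (g := @fst X Y); auto. apply blin_fst.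
    apply blin_comp with (f := D) (g := @snd X Y); auto. apply blin_snd. }
  assert (gQ0 : has_gdrazin V (fun p : V => ((nzero, nadd (C (fst p)) (D (snd p))) : V))).
  { apply (cline (fun y : Y => ((nzero, y) : V)) (fun p : V => nadd (C (fst p)) (D (snd p)))).
    - apply blin_pair. apply blin_zero. apply blin_id.
    - apply blin_add. apply blin_comp with (f := C) (g := @fst X Y); auto. apply blin_fst.
      apply blin_comp with (f := D) (g := @snd X Y); auto. apply blin_snd.
    - apply gd_ext with D; auto. intro v; simpl. rewrite (lin0 _ hC), add0l. reflexivity. }
  destruct (ex_intro (fun Q => Q = (fun p : V => ((nzero, nadd (C (fst p)) (D (snd p))) : V))) _ eq_refl)
    as [Q eQ0].
  rewrite <- eQ0 in hQ0, gQ0. rename hQ0 into hQ, gQ0 into gQ.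
  assert (eQ : forall p, Q p = (nzero, nadd (C (fst p)) (D (snd p)))) by (intro; rewrite eQ0; reflexivity).
  clear eQ0.
  apply gd_ext with (fun p : V => (fun q : prodNS V V => nadd (fst q) (P (snd q))) ((fun p : V => ((Q p, p) : prodNS V V)) p)).
  { intros [x y]. simpl. rewrite eQ, eP. simpl. unfold opmat. simpl. rewrite add0, add0l. reflexivity. }
  apply (cline (W := prodNS V V) (fun q : prodNS V V => nadd (fst q) (P (snd q))) (fun p : V => ((Q p, p) : prodNS V V))).
  { apply blin_add. apply blin_fst. apply blin_comp with (f := P) (g := @snd V V); auto. apply blin_snd. }
  { apply blin_pair; auto. apply blin_id. }
  set (a2 := fun q : prodNS V V => ((Q (fst q), nzero) : prodNS V V)).
  set (b2 := fun q : prodNS V V => ((Q (P (snd q)), nadd (fst q) (P (snd q))) : prodNS V V)).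
  assert (ha2 : is_blin _ _ a2).
  { apply blin_pair. apply blin_comp with (f := Q) (g := @fst V V); auto. apply blin_fst. apply blin_zero. }
  assert (hb2 : is_blin _ _ b2).
  { apply blin_pair. apply blin_comp with (f := Q) (g := fun q => P (snd q)); auto.
    apply blin_comp with (f := P) (g := @snd V V); auto. apply blin_snd.
    apply blin_add. apply blin_fst.
    apply blin_comp with (f := P) (g := @snd V V); auto. apply blin_snd. }
  apply gd_ext with (fun q => nadd (a2 q) (b2 q)).
  { intros [u v]. unfold a2, b2. cbn [fst snd]. rewrite (lin_add _ hQ).
    change (@nadd (prodNS V V) (Q u, nzero) (Q (P v), nadd u (P v))) with
      ((nadd (Q u) (Q (P v)), nadd nzero (nadd u (P v))) : prodNS V V).
    rewrite add0l. reflexivity. }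
  apply ab0; auto.
  - apply gd_ext with (fun q : prodNS V V =>
                         ((Q (fst q), nadd ((fun _ => nzero) (fst q)) ((fun _ => nzero) (snd q))) : prodNS V V)).
    { intros [u v]. unfold a2. cbn [fst snd]. rewrite add0. reflexivity. }
    apply (lowtri_gd Q (fun _ => nzero) (fun _ => nzero)); auto. apply blin_zero. apply blin_zero. apply gd_zero.
  -
    set (S2 := fun r : prodNS V X => ((((nzero, C (snd r)) : V), nadd (fst r) ((snd r, nzero) : V)) : prodNS V V)).
    set (R2 := fun q : prodNS V V => ((fst q, nadd (A (fst (snd q))) (B (snd (snd q)))) : prodNS V X)).
    assert (hS2 : is_blin _ _ S2).
    { apply blin_pair. apply blin_pair. apply blin_zero. apply blin_comp with (f := C) (g := @snd V X); auto. apply blin_snd.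
      apply blin_add. apply blin_fst. apply blin_pair. apply blin_snd. apply blin_zero. }
    assert (hR2 : is_blin _ _ R2).
    { apply blin_pair. apply blin_fst. apply blin_add.
      apply blin_comp with (f := A) (g := fun q : prodNS V V => fst (snd q)); auto.
      apply blin_comp with (f := @fst X Y) (g := @snd V V). apply blin_fst. apply blin_snd.
      apply blin_comp with (f := B) (g := fun q : prodNS V V => snd (snd q)); auto.
      apply blin_comp with (f := @snd X Y) (g := @snd V V). apply blin_snd. apply blin_snd. }
    apply gd_ext with (fun q => S2 (R2 q)).
    { intros [u [v1 v2]]. unfold S2, R2, b2. rewrite !eP. cbn [fst snd]. rewrite eQ. cbn [fst snd].
      rewrite (lin0 _ hD), add0. reflexivity. }
    apply cline; auto.
    set (J := fun z : prodNS X (prodNS Y X) => ((((fst z, fst (snd z)) : V), snd (snd z)) : prodNS V X)).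
    set (J' := fun z : prodNS V X => ((fst (fst z), ((snd (fst z), snd z) : prodNS Y X)) : prodNS X (prodNS Y X))).
    apply (sim (Z2 := prodNS X (prodNS Y X)) _ J J').
    + apply blin_comp with (f := R2) (g := S2); auto.
    + apply blin_pair. apply blin_pair. apply blin_fst.
      apply blin_comp with (f := @fst Y X) (g := @snd X (prodNS Y X)). apply blin_fst. apply blin_snd.
      apply blin_comp with (f := @snd Y X) (g := @snd X (prodNS Y X)). apply blin_snd. apply blin_snd.
    + apply blin_pair. apply blin_comp with (f := @fst X Y) (g := @fst V X). apply blin_fst. apply blin_fst.
      apply blin_pair. apply blin_comp with (f := @snd X Y) (g := @fst V X). apply blin_snd. apply blin_fst.
      apply blin_snd.
    + intros [[x y] w]. reflexivity.
    + apply gd_ext with (fun z : prodNS X (prodNS Y X) =>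
         (((fun _ => nzero) (fst z), nadd ((fun x : X => ((nzero, A x) : prodNS Y X)) (fst z))
             ((fun p => ((C (snd p), nadd (B (fst p)) (A (snd p))) : prodNS Y X)) (snd z))) : prodNS X (prodNS Y X))).
      { intros [x [y w]]. unfold J, J', S2, R2. cbn [fst snd].
        change (@nadd (prodNS X Y) (x, y) (w, nzero)) with ((nadd x w, nadd y nzero) : prodNS X Y).
        change (@nadd (prodNS Y X) (nzero, A x) (C w, nadd (B y) (A w))) with
          ((nadd nzero (C w), nadd (A x) (nadd (B y) (A w))) : prodNS Y X).
        unfold V. cbn [prodNS nadd fst snd]. rewrite add0, add0l, (lin_add _ hA). f_equal. f_equal. grp. }
      apply (lowtri_gd (fun _ : X => nzero) (fun x : X => ((nzero, A x) : prodNS Y X)) (fun p => ((C (snd p), nadd (B (fst p)) (A (snd p))) : prodNS Y X))).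
      * apply blin_zero.
      * apply blin_pair. apply blin_zero. auto.
      * apply blin_pair. apply blin_comp with (f := C) (g := @snd Y X); auto. apply blin_snd.
        apply blin_add. apply blin_comp with (f := B) (g := @fst Y X); auto. apply blin_fst.
        apply blin_comp with (f := A) (g := @snd Y X); auto. apply blin_snd.
      * apply gd_zero.
      * apply K_gd; auto.
  - intros [u [v1 v2]]. unfold a2, b2. rewrite eP. cbn [fst snd]. rewrite !eQ. cbn [fst snd].
    rewrite (lin0 _ hD), add0, (lin0 _ hC), add0l, (lin_add _ hC), (lin_add _ hD), hDCA, hDCB, add0.
    reflexivity.
Qed.
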